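(* For every integer $n\ge 2$, the free algebra on $n$ generators of the variety $\mathbb{V}(\mathbb{X}_n^\ast)$ generated by the Heyting algebra $\mathbb{X}_n^\ast$ is finite.
   Context: $\mathbb{N}=\{0,1,2,\dots\}$. Fix an integer $n\ge 2$ and put $N=2^{n+1}-1$. Let $T_n$ be the set of triples $\langle k_1,k_2,k_3\rangle$ of pairwise distinct natural numbers $\le N$, with a fixed enumeration $T_n=\{s_0,\dots,s_t\}$. Let $U_n$ be a set of pairwise distinct elements $a_m,b_m$ ($m\in\mathbb{N}$) and $c_{m,k},d_{m,k},e^a_{m,k},e^b_{m,k}$ ($m\in\mathbb{N}$, $0\le k\le N$). Define $x\prec y$ on $U_n$ iff one of: (1) $x=a_m$ and $y\in\{c_{m,k_1},c_{m,k_2}\}$, where $s_j=\langle k_1,k_2,k_3\rangle$ with $j\equiv m \bmod (t+1)$; (2) $x=b_m$ and $y\in\{c_{m,k_1},c_{m,k_3}\}$, with $s_j$ as in (1); (3) $m\ge1$, $x=c_{m,k}$, and either $y=e^a_{m-1,j}$ with $j\ne k$, or $y=e^b_{m-1,i}$ for any $i\le N$; (4) $x=d_{m,k}$ and $y=c_{m,j}$ with $j\neq k$; (5) $x=e^a_{m,k}$ and either $y=a_m$ or $y=d_{m,j}$ with $j\ne k$; (6) $x=e^b_{m,k}$ and either $y=b_m$ or $y=d_{m,j}$ with $j\ne k$. Let $\le$ be the reflexive transitive closure of $\prec$. The $n$-abomination $\mathbb{X}_n$ is the poset $U_n\cup\{\bot\}$ where $\bot$ is a new least element, with the topology in which $U$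 is open iff $\bot\notin U$ or $U$ is cofinite; it is an Esakia space. $\mathbb{X}_n^\ast$ denotes its Esakia dual, the Heyting algebra of clopen upsets of $\mathbb{X}_n$ (with intersection, union, $0=\emptyset$, $1=X_n$, and $U\to V=X_n\setminus{\downarrow}(U\setminus V)$). *)

(* Defs.v *)
From Stdlib Require Import Relations.
From Stdlib Require List.
From mathcomp Require Import all_boot.
Set Implicit Arguments. Unset Strict Implicit. Unset Printing Implicit Defensive.

Definition NN (n : nat) : nat := 2 ^ n.+1 - 1.

(* triples <k1,k2,k3> encoded as ((k1,k2),k3) *)
Definition is_triple (n : nat) (tr : nat * nat * nat) : bool :=
  let '(k1, k2, k3) := tr in
  [&& k1 != k2, k1 != k3, k2 != k3, k1 <= NN n, k2 <= NN n & k3 <= NN n].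

(* s = [:: s_0; ...; s_t] is an enumeration of T_n (without repetition) *)
Definition enumeration (n : nat) (s : seq (nat * nat * nat)) : Prop :=
  uniq s /\ forall tr, (tr \in s) = is_triple n tr.

Definition sel (s : seq (nat * nat * nat)) (m : nat) : nat * nat * nat :=
  nth (0, 0, 0) s (m %% size s).

(* Points of X_n = U_n ∪ {⊥}; indices k range over 0..N, i.e. 'I_(2^(n+1)). *)
Inductive pt (n : nat) : Type :=
| Bot
| A of nat
| B of nat
| C of nat & 'I_(2 ^ n.+1)
| D of nat & 'I_(2 ^ n.+1)
| EA of nat & 'I_(2 ^ n.+1)
| EB of nat & 'I_(2 ^ n.+1).
Arguments Bot {n}.

Inductive prec (n : nat) (s : seq (nat * nat * nat)) : pt n -> pt n -> Prop :=
| prec_a1 m k : nat_of_ord k = (sel s m).1.1 -> prec s (A n m) (C m k)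
| prec_a2 m k : nat_of_ord k = (sel s m).1.2 -> prec s (A n m) (C m k)
| prec_b1 m k : nat_of_ord k = (sel s m).1.1 -> prec s (B n m) (C m k)
| prec_b3 m k : nat_of_ord k = (sel s m).2 -> prec s (B n m) (C m k)
| prec_cea m k j : j != k -> prec s (C m.+1 k) (EA m j)
| prec_ceb m k i : prec s (C m.+1 k) (EB m i)
| prec_dc m k j : j != k -> prec s (D m k) (C m j)
| prec_eaa m k : prec s (EA m k) (A n m)
| prec_ead m k j : j != k -> prec s (EA m k) (D m j)
| prec_ebb m k : prec s (EB m k) (B n m)
| prec_ebd m k j : j != k -> prec s (EB m k) (D m j).

Definition le (n : nat) (s : seq (nat * nat * nat)) (x y : pt n) : Prop :=
  x = Bot \/ clos_refl_trans (pt n) (prec s) x y.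

Definition cofinite (n : nat) (U : pt n -> Prop) : Prop :=
  exists l : list (pt n), forall x, ~ U x -> List.In x l.

Definition is_open (n : nat) (U : pt n -> Prop) : Prop := ~ U Bot \/ cofinite U.

Definition is_clopen (n : nat) (U : pt n -> Prop) : Prop :=
  is_open U /\ is_open (fun x => ~ U x).

Definition is_upset (n : nat) (s : seq (nat * nat * nat)) (U : pt n -> Prop) : Prop :=
  forall x y, le s x y -> U x -> U y.

(* elements of the dual Heyting algebra X_n^dual *)
Definition clopen_upset (n : nat) (s : seq (nat * nat * nat)) (U : pt n -> Prop) : Prop :=
  is_clopen U /\ is_upset s U.

Inductive hterm (k : nat) : Type :=
| TVar of 'I_k
| TBot
| TTop
| TMeet of hterm k & hterm k
| TJoin of hterm k & hterm k
| TImp of hterm k & hterm k.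
Arguments TBot {k}.
Arguments TTop {k}.

(* evaluation of terms in X_n^dual : ∩, ∪, ∅, X_n, U → V = X_n \ ↓(U \ V) *)
Fixpoint eval (n k : nat) (s : seq (nat * nat * nat)) (v : 'I_k -> pt n -> Prop)
  (t : hterm k) : pt n -> Prop :=
  match t with
  | TVar i => v i
  | TBot => fun _ => False
  | TTop => fun _ => True
  | TMeet t1 t2 => fun x => eval s v t1 x /\ eval s v t2 x
  | TJoin t1 t2 => fun x => eval s v t1 x \/ eval s v t2 x
  | TImp t1 t2 => fun x =>
      ~ (exists y, (eval s v t1 y /\ ~ eval s v t2 y) /\ le s x y)
  end.

Definition term_equiv (n k : nat) (s : seq (nat * nat * nat)) (t u : hterm k) : Prop :=
  forall v : 'I_k -> pt n -> Prop, (forall i, clopen_upset s (v i)) ->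
  forall x, eval s v t x <-> eval s v u x.

(* The free k-generated algebra of V(X_n^dual) is the term algebra modulo the
   identities of X_n^dual; it is finite iff finitely many classes exist. *)
Definition free_algebra_finite (n k : nat) (s : seq (nat * nat * nat)) : Prop :=
  exists l : list (hterm k), forall t : hterm k,
    exists u, List.In u l /\ @term_equiv n k s t u.

(* Main.v *)
Require Import Defs.
From Stdlib Require Import Relations Classical ClassicalEpsilon.
From mathcomp Require Import all_boot zify.
Set Implicit Arguments. Unset Strict Implicit. Unset Printing Implicit Defensive.

Section Main.
Variable n : nat.
Variable s : seq (nat * nat * nat).
Hypothesis Hn : 2 <= n.
Hypothesis Hs : enumeration n s.

Local Notation K := (2 ^ n.+1).
Local Notation P := (pt n).
Local Notation crt := (clos_refl_trans (pt n) (prec s)).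

Definition lay (x : P) : nat :=
  match x with Bot => 0 | A m => m | B m => m | C m _ => m | D m _ => m
  | EA m _ => m | EB m _ => m end.
Definition rk (x : P) : nat :=
  match x with Bot => 0 | C _ _ => 0 | A _ | B _ | D _ _ => 1 | _ => 2 end.
Definition pos (x : P) := 3 * lay x + rk x.

Lemma prec_pos (x y : P) : prec s x y -> pos y < pos x.
Proof. case=> * /=; rewrite /pos /=; lia. Qed.

Lemma prec_nbot (x y : P) : prec s x y -> x <> Bot /\ y <> Bot.
Proof. by case. Qed.

Lemma crt_pos (x y : P) : crt x y -> x = y \/ pos y < pos x.
Proof.
elim=> [a b /prec_pos|a|a b c _ h1 _ h2]; auto.
case: h1 => [h1|h1]; case: h2 => [h2|h2]; subst; auto; right; lia.
Qed.

Lemma crt_first (x y : P) : crt x y -> x = y \/ exists z, prec s x z /\ crt z y.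
Proof.
move/clos_rt_rt1n_iff; case; first by left.
move=> z w H1 H2; right; exists z; split=> //; exact/clos_rt_rt1n_iff.
Qed.

Lemma crt_nbot (x y : P) : crt x y -> x <> Bot -> y <> Bot.
Proof. elim=> [a b /prec_nbot []|a|a b c _ h1 _ h2]; auto. Qed.

Lemma le_refl (x : P) : le s x x.
Proof. right; exact: rt_refl. Qed.

Lemma prec_le (x y : P) : prec s x y -> le s x y.
Proof. by move=> h; right; apply: rt_step. Qed.

Lemma le_trans (x y z : P) : le s x y -> le s y z -> le s x z.
Proof.
case: (classic (x = Bot)) => [->|nx]; first by left.
case=> [//|h1]; case=> [eyB|h2].
  by subst; exfalso; exact: (crt_nbot h1).
right; exact: rt_trans h1 h2.
Qed.

Lemma le_nbot (x y : P) : le s x y -> x <> Bot -> y <> Bot.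
Proof. by case=> // h nx; exact: crt_nbot h nx. Qed.

Lemma le_pos (x y : P) : le s x y -> x <> Bot -> x = y \/ pos y < pos x.
Proof. by case=> // h _; exact: crt_pos. Qed.

Lemma le_first (x y : P) : le s x y -> x <> Bot ->
  x = y \/ exists z, prec s x z /\ le s z y.
Proof.
case=> // h _; case: (crt_first h) => [->|[z [h1 h2]]]; [left|right] => //.
by exists z; split=> //; right.
Qed.

Lemma prec_le_trans (x y z : P) : prec s x y -> le s y z -> le s x z.
Proof. move=> /prec_le; exact: le_trans. Qed.


Lemma K_ge8 : 8 <= K.
Proof. by have : 2 ^ 3 <= 2 ^ n.+1 by rewrite leq_exp2l. Qed.

Lemma K_pos : 0 < K.
Proof. by have := K_ge8; case: (2 ^ n.+1). Qed.

Definition o0 : 'I_K := Ordinal K_pos.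
Definition oK (i : nat) : 'I_K := insubd o0 i.
Lemma oK_val i : i < K -> val (oK i) = i.
Proof. by move=> h; rewrite /oK insubdK. Qed.

Lemma neqE (a b : 'I_K) : (a != b) = (val a != val b).
Proof. by rewrite val_eqE. Qed.

Lemma pick1 (a : 'I_K) : exists b : 'I_K, b != a.
Proof.
have h8 := K_ge8.
case: (val a =P 0) => h.
  exists (oK 1); rewrite neqE oK_val; lia.
exists (oK 0); rewrite neqE oK_val; lia.
Qed.

Lemma pick2 (a b : 'I_K) : exists c : 'I_K, (c != a) && (c != b).
Proof.
have h8 := K_ge8.
case: (val a =P 0) => h; case: (val b =P 0) => h'.
- exists (oK 1); rewrite !neqE oK_val; lia.
- case: (val b =P 1) => h2.
    exists (oK 2); rewrite !neqE oK_val; lia.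
  exists (oK 1); rewrite !neqE oK_val; lia.
- case: (val a =P 1) => h2.
    exists (oK 2); rewrite !neqE oK_val; lia.
  exists (oK 1); rewrite !neqE oK_val; lia.
- exists (oK 0); rewrite !neqE oK_val; lia.
Qed.

Lemma pick3 (a : 'I_K) : exists b c : 'I_K, [&& b != a, c != a & b != c].
Proof.
have [b hb] := pick1 a; have [c /andP [hc1 hc2]] := pick2 a b.
exists b, c; rewrite hb hc1 /=; by rewrite eq_sym.
Qed.

Lemma tri012 : is_triple n (0, 1, 2).
Proof. have h8 := K_ge8; rewrite /is_triple /NN /=; repeat (apply/andP; split); lia. Qed.

Lemma size_s_gt0 : 0 < size s.
Proof. have := tri012; rewrite -(proj2 Hs); by case: s. Qed.

Lemma sel_in m : sel s m \in s.
Proof. by rewrite /sel mem_nth // ltn_pmod // size_s_gt0. Qed.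

Lemma sel_tri m : is_triple n (sel s m).
Proof. by rewrite -(proj2 Hs) sel_in. Qed.

Definition t1 m : 'I_K := oK (sel s m).1.1.
Definition t2 m : 'I_K := oK (sel s m).1.2.
Definition t3 m : 'I_K := oK (sel s m).2.

Lemma t_vals m : [/\ val (t1 m) = (sel s m).1.1, val (t2 m) = (sel s m).1.2,
  val (t3 m) = (sel s m).2, t1 m != t2 m & t1 m != t3 m].
Proof.
have := sel_tri m; rewrite /t1 /t2 /t3 /is_triple /NN.
case: (sel s m) => [[k1 k2] k3] /= /andP [h1 /andP [h2 /andP [h3 /andP [h4 /andP [h5 h6]]]]].
have hK := K_pos.
rewrite !neqE !oK_val //; lia.
Qed.

Lemma precA1 m : prec s (A n m) (C m (t1 m)).
Proof. by apply: prec_a1; case: (t_vals m). Qed.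
Lemma precA2 m : prec s (A n m) (C m (t2 m)).
Proof. by apply: prec_a2; case: (t_vals m). Qed.
Lemma precB1 m : prec s (B n m) (C m (t1 m)).
Proof. by apply: prec_b1; case: (t_vals m). Qed.
Lemma precB3 m : prec s (B n m) (C m (t3 m)).
Proof. by apply: prec_b3; case: (t_vals m). Qed.

Lemma upC1 m (j : 'I_K) (y : P) : y <> Bot -> lay y = m -> y <> EA m j ->
  le s (C m.+1 j) y.
Proof.
case: y => //= [m' _ ->|m' _ ->|m' i _ ->|m' i _ ->|m' i _ ->|m' i _ ->] hne.
- have [j2 hj2] := pick1 j.
  apply: prec_le_trans (prec_cea s m hj2) _; apply/prec_le/prec_eaa.
- apply: prec_le_trans (prec_ceb s _ j o0) _; apply/prec_le/prec_ebb.
- have [i2 hi2] := pick1 i; have [i3 hi3] := pick1 i2.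
  apply: prec_le_trans (prec_ceb s _ j i3) _.
  have hi3' : i2 != i3 by rewrite eq_sym.
  apply: prec_le_trans (prec_ebd s _ hi3') _; apply/prec_le/prec_dc.
  by rewrite eq_sym.
- have [i3 hi3] := pick1 i.
  apply: prec_le_trans (prec_ceb s _ j i3) _; apply/prec_le/prec_ebd.
  by rewrite eq_sym.
- apply/prec_le/prec_cea; apply/negP => /eqP e; by apply: hne; rewrite e.
- apply/prec_le/prec_ceb.
Qed.

Lemma upC m (j : 'I_K) (y : P) : y <> Bot -> lay y < m -> y <> EA m.-1 j ->
  le s (C m j) y.
Proof.
elim: m j y => [//|m IH] j y ny hl he.
case: (ltnP (lay y) m) => hl2; last first.
  by apply: upC1 => //; lia.
have [i hi] : exists i : 'I_K, y <> EA m.-1 i.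
  case: (classic (y = EA m.-1 o0)) => [e|h]; last by exists o0.
  exists (oK 1); rewrite e; case=> e2.
  by have := congr1 val e2; rewrite oK_val // (leq_trans (isT : 2 <= 8) K_ge8).
apply: le_trans (IH i y ny hl2 hi).
apply: upC1 => //.
Qed.

Lemma base_C (x : P) : x <> Bot -> exists j, le s x (C (lay x) j).
Proof.
case: x => //= [m|m|m k|m k|m k|m k] _.
- exists (t1 m); exact/prec_le/precA1.
- exists (t1 m); exact/prec_le/precB1.
- exists k; exact: le_refl.
- have [j hj] := pick1 k; exists j; exact/prec_le/prec_dc.
- exists (t1 m); apply: prec_le_trans (prec_eaa _ _ _) _; exact/prec_le/precA1.
- exists (t1 m); apply: prec_le_trans (prec_ebb _ _ _) _; exact/prec_le/precB1.
Qed.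

Lemma C_to_B m (j : 'I_K) : le s (C m.+1 j) (B n m).
Proof. apply: prec_le_trans (prec_ceb s _ j o0) _; exact/prec_le/prec_ebb. Qed.

Lemma chainC d q (x : P) : x <> Bot -> lay x = q + d -> exists j, le s x (C q j).
Proof.
elim: d x => [|d IH] x nx hl.
  by have [j hj] := base_C nx; exists j; rewrite hl addn0 in hj.
have [j hj] := base_C nx; rewrite hl addnS in hj.
have [j' hj'] := IH (B n (q + d)) (fun e => ltac:(discriminate)) erefl.
exists j'; apply: le_trans hj _; apply: le_trans hj'; exact: C_to_B.
Qed.

Definition isC (x : P) := match x with C _ _ => true | _ => false end.

Lemma two (x : P) : x <> Bot -> ~~ isC x ->
  exists j j', [/\ j != j', le s x (C (lay x) j) & le s x (C (lay x) j')].
Proof.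
case: x => //= [m|m|m k|m k|m k] _ _.
- exists (t1 m), (t2 m); split; [by case: (t_vals m)|exact/prec_le/precA1|exact/prec_le/precA2].
- exists (t1 m), (t3 m); split; [by case: (t_vals m)|exact/prec_le/precB1|exact/prec_le/precB3].
- have [b [c /and3P [h1 h2 h3]]] := pick3 k.
  by exists b, c; split=> //; apply/prec_le/prec_dc.
- exists (t1 m), (t2 m); split; first by case: (t_vals m).
  + apply: prec_le_trans (prec_eaa _ _ _) _; exact/prec_le/precA1.
  + apply: prec_le_trans (prec_eaa _ _ _) _; exact/prec_le/precA2.
- exists (t1 m), (t3 m); split; first by case: (t_vals m).
  + apply: prec_le_trans (prec_ebb _ _ _) _; exact/prec_le/precB1.
  + apply: prec_le_trans (prec_ebb _ _ _) _; exact/prec_le/precB3.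
Qed.

Lemma nonC_below (x y : P) : x <> Bot -> ~~ isC x -> y <> Bot -> lay y < lay x ->
  le s x y.
Proof.
move=> nx cx ny hl; have [j [j' [hjj' h1 h2]]] := two nx cx.
case: (classic (y = EA (lay x).-1 j)) => e.
  apply: le_trans h2 _; apply: upC => //; rewrite e; case=> e2.
  by move: hjj'; rewrite e2 eqxx.
by apply: le_trans h1 _; apply: upC.
Qed.

Lemma below_all (x y : P) : x <> Bot -> y <> Bot -> lay y + 2 <= lay x -> le s x y.
Proof.
move=> nx ny hl.
have e : lay x = (lay y).+2 + (lay x - (lay y).+2) by lia.
have [j hj] := chainC nx e.
apply: le_trans hj _; apply: le_trans (C_to_B _ _) _.
apply: nonC_below => //=; lia.
Qed.

Lemma below_except m (y x1 : P) : y <> Bot -> x1 <> Bot -> m < lay y -> lay x1 <= m ->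
  le s y x1 \/ exists j, y = C m.+1 j /\ x1 = EA m j.
Proof.
move=> ny nx hy hx.
case: (leqP (lay x1 + 2) (lay y)) => h; first by left; exact: below_all.
case hc: (isC y); last first.
  by left; apply: nonC_below => //; [rewrite hc|lia].
case: y ny hy h hc => //= m' j ny hy h _.
have -> : m' = m.+1 by lia.
case: (classic (x1 = EA m j)) => e; first by right; exists j.
left; apply: upC => //; lia.
Qed.

Lemma rk_le2 (x : P) : rk x <= 2.
Proof. by case: x. Qed.

Lemma prec_D_inv m k (z : P) : prec s (D m k) z -> exists j, j != k /\ z = C m j.
Proof. move=> h; inversion h; subst; eauto. Qed.

Lemma prec_EA_inv m k (z : P) : prec s (EA m k) z ->
  z = A n m \/ exists j, j != k /\ z = D m j.
Proof. move=> h; inversion h; subst; eauto. Qed.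

Lemma prec_EB_inv m k (z : P) : prec s (EB m k) z ->
  z = B n m \/ exists j, j != k /\ z = D m j.
Proof. move=> h; inversion h; subst; eauto. Qed.

Lemma prec_A_inv m (z : P) : prec s (A n m) z ->
  z = C m (t1 m) \/ z = C m (t2 m).
Proof.
move=> h; inversion h; subst; case: (t_vals m) => v1 v2 _ _ _.
  by left; congr C; apply: val_inj; rewrite v1.
by right; congr C; apply: val_inj; rewrite v2.
Qed.

Lemma prec_B_inv m (z : P) : prec s (B n m) z ->
  z = C m (t1 m) \/ z = C m (t3 m).
Proof.
move=> h; inversion h; subst; case: (t_vals m) => v1 _ v3 _ _.
  by left; congr C; apply: val_inj; rewrite v1.
by right; congr C; apply: val_inj; rewrite v3.
Qed.

Lemma le_same_pos (x y : P) : le s x y -> x <> Bot -> pos x = pos y -> x = y.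
Proof. move=> h nx e; case: (le_pos h nx) => // ; lia. Qed.

Definition Fp (q : nat) (k : 'I_K) : P :=
  if q %% 3 == 0 then C (q %/ 3) k else if q %% 3 == 1 then D (q %/ 3) k
  else EA (q %/ 3) k.

Lemma Fp0 m k : Fp (3 * m) k = C m k.
Proof.
rewrite /Fp; have -> : (3 * m) %% 3 = 0 by lia.
by have -> : (3 * m) %/ 3 = m by lia.
Qed.
Lemma Fp1 m k : Fp (3 * m + 1) k = D m k.
Proof.
rewrite /Fp; have -> : (3 * m + 1) %% 3 = 1 by lia.
by have -> : (3 * m + 1) %/ 3 = m by lia.
Qed.
Lemma Fp2 m k : Fp (3 * m + 2) k = EA m k.
Proof.
rewrite /Fp; have -> : (3 * m + 2) %% 3 = 2 by lia.
by have -> : (3 * m + 2) %/ 3 = m by lia.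
Qed.

Lemma q_cases q : exists m, q = 3 * m \/ q = 3 * m + 1 \/ q = 3 * m + 2.
Proof. exists (q %/ 3); lia. Qed.

Lemma Fp_nbot q k : Fp q k <> Bot.
Proof. by have [m [->|[->|->]]] := q_cases q; rewrite ?Fp0 ?Fp1 ?Fp2. Qed.

Lemma Fp_step q (j k : 'I_K) : j != k -> le s (Fp q.+1 k) (Fp q j).
Proof.
move=> h; have [m [->|[->|->]]] := q_cases q.
- rewrite -addn1 Fp1 Fp0; exact/prec_le/prec_dc.
- rewrite (_ : (3 * m + 1).+1 = 3 * m + 2); last by lia.
  rewrite Fp2 Fp1; exact/prec_le/prec_ead.
- rewrite (_ : (3 * m + 2).+1 = 3 * m.+1); last by lia.
  rewrite Fp0 Fp2; exact/prec_le/prec_cea.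
Qed.

Lemma swap q (k k' : 'I_K) (x1 : P) : k != k' -> le s (Fp q k) x1 ->
  x1 = Fp q k \/ (0 < q /\ x1 = Fp q.-1 k') \/ le s (Fp q k') x1.
Proof.
move=> hk h.
have nx1 := le_nbot h (@Fp_nbot q k).
case: (le_pos h (@Fp_nbot q k)) => [<-|hp]; first by left.
right; have [m [eq|[eq|eq]]] := q_cases q; subst q.
- rewrite !Fp0 in h hp *; rewrite /pos /= in hp.
  have hr := rk_le2 x1; rewrite /pos in hp.
  case: (classic (x1 = EA m.-1 k')) => e.
    left; split; first lia.
    rewrite (_ : (3 * m).-1 = 3 * m.-1 + 2); last by lia.
    by rewrite Fp2.
  right; apply: upC => //; lia.
- rewrite !Fp1 in h hp *; rewrite /pos /= in hp.
  have hr := rk_le2 x1; rewrite /pos in hp.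
  case: (ltnP (lay x1) m) => hl.
    by right; apply: nonC_below.
  have [hl2 hr0] : lay x1 = m /\ rk x1 = 0 by lia.
  case: x1 nx1 h hp hr hl hl2 hr0 => //= m' j _ h _ _ _ e _; subst m'.
  have [j2 [hj2 e2]] : exists j2, j2 != k /\ C m j2 = C m j.
    case: (le_first h ltac:(discriminate)) => [//|[z [hz1 hz2]]].
    have [j2 [hj2 ez]] := prec_D_inv hz1; subst z.
    exists j2; split=> //; apply: le_same_pos hz2 _ _ => //.
  case: e2 => e2; subst j2.
  case: (eqVneq j k') => [ej|nj].
    left; split; first lia.
    by rewrite (_ : (3 * m + 1).-1 = 3 * m); [rewrite Fp0 ej|lia].
  right; exact/prec_le/prec_dc.
- rewrite !Fp2 in h hp *; rewrite /pos /= in hp.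
  have hr := rk_le2 x1; rewrite /pos in hp.
  case: (ltnP (lay x1) m) => hl.
    by right; apply: nonC_below.
  have hl2 : lay x1 = m by lia.
  case: (eqVneq (rk x1) 0) => hr0.
    case: x1 nx1 h hp hr hl hl2 hr0 => //= m' j _ h _ _ _ e _; subst m'.
    right; have [i /andP [hi1 hi2]] := pick2 k' j.
    apply: prec_le_trans (prec_ead s m hi1) _; apply/prec_le/prec_dc.
    by rewrite eq_sym.
  have hr1 : rk x1 = 1 by lia.
  case: (le_first h ltac:(discriminate)) => [e|[z [hz1 hz2]]].
    by rewrite -e in hr1.
  have ez : z = x1.
    apply: le_same_pos hz2 _ _.
      by case: (prec_EA_inv hz1) => [->|[j [_ ->]]].
    rewrite /pos hl2 hr1.
    by case: (prec_EA_inv hz1) => [->|[j [_ ->]]].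
  subst z.
  case: (prec_EA_inv hz1) => [->|[j [hj ->]]].
    right; exact/prec_le/prec_eaa.
  case: (eqVneq j k') => [ej|nj].
    left; split; first lia.
    by rewrite (_ : (3 * m + 2).-1 = 3 * m + 1); [rewrite Fp1 ej|lia].
  right; exact/prec_le/prec_ead.
Qed.

Definition Val := 'I_n -> P -> Prop.

Definition sameCol (v : Val) (x y : P) := forall g, v g x <-> v g y.

Definition bisim (v : Val) (Z : P -> P -> Prop) := forall x y, Z x y ->
  [/\ sameCol v x y, (forall x1, le s x x1 -> exists y1, le s y y1 /\ Z x1 y1)
   & (forall y1, le s y y1 -> exists x1, le s x x1 /\ Z x1 y1)].

Definition sim (v : Val) (x y : P) := exists Z, bisim v Z /\ Z x y.

Lemma bisim_intro (v : Val) (Z : P -> P -> Prop) : (forall x y, Z x y -> Z y x) ->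
  (forall x y, Z x y -> sameCol v x y /\
     forall x1, le s x x1 -> exists y1, le s y y1 /\ Z x1 y1) -> bisim v Z.
Proof.
move=> hs hf x y hz; have [hc hfo] := hf x y hz; split=> // y1 hy1.
have [_ hb] := hf y x (hs _ _ hz).
have [x1 [h1 h2]] := hb y1 hy1; exists x1; split=> //; exact: hs.
Qed.

Lemma bisim_sim (v : Val) Z x y : bisim v Z -> Z x y -> sim v x y.
Proof. by move=> hb hz; exists Z. Qed.

Lemma sim_bisim (v : Val) : bisim v (sim v).
Proof.
move=> x y [Z [hZ hz]]; have [hc hf hb] := hZ x y hz; split=> //.
  move=> x1 /hf [y1 [h1 h2]]; exists y1; split=> //; exact: bisim_sim h2.
move=> y1 /hb [x1 [h1 h2]]; exists x1; split=> //; exact: bisim_sim h2.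
Qed.

Lemma sim_refl (v : Val) x : sim v x x.
Proof.
exists (fun a b => a = b); split=> //; move=> a b ->; split=> //.
- by move=> y1 hy; exists y1.
- by move=> y1 hy; exists y1.
Qed.

Lemma sim_sym (v : Val) x y : sim v x y -> sim v y x.
Proof.
move=> [Z [hZ hz]]; exists (fun a b => Z b a); split=> //.
move=> a b hab; have [hc hf hb] := hZ b a hab; split=> //.
by move=> g; split; move/(hc g).
Qed.

Lemma sim_trans (v : Val) x y z : sim v x y -> sim v y z -> sim v x z.
Proof.
move=> h1 h2; exists (fun a c => exists b, sim v a b /\ sim v b c); split; last by exists y.
move=> a c [b [hab hbc]].
have [c1 f1 b1] := sim_bisim hab; have [c2 f2 b2] := sim_bisim hbc; split.
- by move=> g; rewrite (c1 g) (c2 g).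
- move=> a1 /f1 [b1' [hb1 hab1]]; have [c1' [hc1 hbc1]] := f2 _ hb1.
  by exists c1'; split=> //; exists b1'.
- move=> c1' /b2 [b1' [hb1 hbc1]]; have [a1 [ha1 hab1]] := b1 _ hb1.
  by exists a1; split=> //; exists b1'.
Qed.

Lemma eval_sim (v : Val) (t : hterm n) : forall x y, sim v x y ->
  (eval s v t x <-> eval s v t y).
Proof.
elim: t => [g|||t1 IH1 t2 IH2|t1 IH1 t2 IH2|t1 IH1 t2 IH2] x y hxy /=.
- by have [c _ _] := sim_bisim hxy; apply: c.
- by [].
- by [].
- by rewrite (IH1 _ _ hxy) (IH2 _ _ hxy).
- by rewrite (IH1 _ _ hxy) (IH2 _ _ hxy).
- have [_ f b] := sim_bisim hxy; split=> hn [w [[hw1 hw2] hw]].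
  + have [x1 [hx1 hs1]] := b _ hw; apply: hn; exists x1; split=> //.
    by rewrite (IH1 _ _ hs1) (IH2 _ _ hs1).
  + have [y1 [hy1 hs1]] := f _ hw; apply: hn; exists y1; split=> //.
    by rewrite -(IH1 _ _ hs1) -(IH2 _ _ hs1).
Qed.

Lemma swap_sim (v : Val) (k k' : 'I_K) : k != k' ->
  (forall q, sameCol v (Fp q k) (Fp q k')) -> forall q, sim v (Fp q k) (Fp q k').
Proof.
move=> hkk hc q.
pose Z := fun x y => x = y \/ exists q, (x = Fp q k /\ y = Fp q k') \/ (x = Fp q k' /\ y = Fp q k).
have key : forall q (a b : 'I_K) x1, a != b -> le s (Fp q a) x1 ->
    (a = k /\ b = k') \/ (a = k' /\ b = k) ->
    exists y1, le s (Fp q b) y1 /\ Z x1 y1.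
  move=> q0 a b x1 hab h hab2.
  case: (swap hab h) => [->|[[hq ->]|hl]].
  - exists (Fp q0 b); split; first exact: le_refl.
    by right; exists q0; case: hab2 => [[-> ->]|[-> ->]]; [left|right].
  - exists (Fp q0.-1 a); split.
      have e : q0 = q0.-1.+1 by rewrite prednK.
      by rewrite {1}e; apply: Fp_step.
    by right; exists q0.-1; case: hab2 => [[-> ->]|[-> ->]]; [right|left].
  - by exists x1; split=> //; left.
apply: (@bisim_sim v Z); last by right; exists q; left.
apply: bisim_intro.
  move=> x y [->|[q0 [[-> ->]|[-> ->]]]]; [by left|right; exists q0; right|right; exists q0; left]; done.
move=> x y [->|[q0 [[-> ->]|[-> ->]]]].
- split=> // x1 hx; exists x1; split=> //; by left.
- split=> //; move=> x1 hx; apply: key hx _ => //; by left.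
- split; first by move=> g; rewrite (hc q0 g).
  move=> x1 hx; apply: key hx _; [by rewrite eq_sym|by right].
Qed.

Definition asb (p : Prop) : bool := if excluded_middle_informative p then true else false.
Lemma asbP (p : Prop) : reflect p (asb p).
Proof. by rewrite /asb; case: excluded_middle_informative => h; constructor. Qed.

Lemma least (Q : nat -> Prop) : (exists q, Q q) ->
  exists q, Q q /\ forall q', q' < q -> ~ Q q'.
Proof.
move=> [q hq]; apply: NNPP => hn.
suff : forall N q, q <= N -> ~ Q q by move/(_ q q (leqnn q)).
elim=> [|N IH] q0 hq0 hQ.
  apply: hn; exists q0; split=> // q' hq'; lia.
case: (leqP q0 N) => h; first exact: IH h hQ.
apply: hn; exists q0; split=> // q' hq'; apply: IH; lia.
Qed.

Definition Ups (v : Val) := forall g, is_upset s (v g).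

Definition full (v : Val) g q := forall j, v g (Fp q j).
Definition LNF (v : Val) g q := ~ full v g q /\ forall q', q' < q -> full v g q'.

Definition phi (v : Val) (k : 'I_K) : {ffun 'I_n -> bool} :=
  [ffun g => asb (forall q, LNF v g q -> v g (Fp q k))].

Lemma LNF_uniq (v : Val) g q1 q2 : LNF v g q1 -> LNF v g q2 -> q1 = q2.
Proof.
move=> [h1 h1'] [h2 h2']; case: (ltngtP q1 q2) => // h.
- by case: (h1 (h2' _ h)).
- by case: (h2 (h1' _ h)).
Qed.

Lemma pair_exists (v : Val) : Ups v ->
  exists k k' : 'I_K, k != k' /\ forall q, sameCol v (Fp q k) (Fp q k').
Proof.
move=> hup.
have : ~~ injectiveb (phi v).
  apply/negP => /injectiveP /leq_card; rewrite card_ord card_ffun card_bool card_ord.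
  by rewrite leq_exp2l // ltnn.
move/injectivePn => [k [k' hkk e]]; exists k, k'; split=> // q g.
have upg : forall x y, le s x y -> v g x -> v g y := hup g.
have eg : (forall q, LNF v g q -> v g (Fp q k)) <-> (forall q, LNF v g q -> v g (Fp q k')).
  have e2 : phi v k g = phi v k' g by rewrite e.
  rewrite !ffunE in e2.
  by split=> h; apply/asbP; [rewrite -e2|rewrite e2]; apply/asbP.
case: (classic (exists q, ~ full v g q)) => hex; last first.
  have hf : forall q, full v g q by move=> q0; apply: NNPP => hq; apply: hex; exists q0.
  by split=> _; apply: hf.
have [q0 [hq0 hlt]] := least hex.
have L0 : LNF v g q0 by split=> // q' /hlt; apply: NNPP.
have eq0 : v g (Fp q0 k) <-> v g (Fp q0 k').
  split=> h.
  - by apply: (proj1 eg _ q0 L0) => q1 hq1; rewrite (LNF_uniq hq1 L0).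
  - by apply: (proj2 eg _ q0 L0) => q1 hq1; rewrite (LNF_uniq hq1 L0).
have [j0 hj0] : exists j0, ~ v g (Fp q0 j0) by apply: not_all_ex_not.
have step : forall q1 (a : 'I_K), v g (Fp q1.+1 a) -> forall j, j != a -> v g (Fp q1 j).
  by move=> q1 a ha j hj; apply: upg ha; apply: Fp_step.
have S1 : forall a, v g (Fp q0.+1 a) -> j0 = a.
  move=> a ha; apply/eqP; apply/negP => /negP hn.
  by apply: hj0; apply: step ha _ hn.
have N1 : forall a b, a != b -> (v g (Fp q0 a) <-> v g (Fp q0 b)) -> ~ v g (Fp q0.+1 a).
  move=> a b hab hiff ha; have ej := S1 _ ha; subst j0.
  apply: hj0; apply/hiff; apply: step ha _ _; by rewrite eq_sym.
have N2 : forall j, ~ v g (Fp q0.+2 j).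
  move=> j hj; have [i1 [i2 /and3P [h1 h2 h3]]] := pick3 j.
  have e1 := S1 _ (step _ _ hj _ h1); have e2 := S1 _ (step _ _ hj _ h2).
  by move: h3; rewrite -e1 -e2 eqxx.
have N3 : forall d j, ~ v g (Fp (q0.+2 + d) j).
  elim=> [|d IH] j; first by rewrite addn0.
  move=> hj; have [i hi] := pick1 j; apply: (IH i); rewrite addnS in hj.
  exact: step hj _ hi.
case: (ltngtP q q0) => hq.
- by split=> _; apply: (NNPP _ (hlt _ hq)).
- case: (eqVneq q q0.+1) => [->|hq1].
    split=> h; exfalso; [apply: (N1 k k') | apply: (N1 k' k)] => //; rewrite 1?eq_sym //.
    by split=> h'; apply/eq0.
  have -> : q = q0.+2 + (q - q0.+2) by lia.
  by split=> h; exfalso; apply: N3 h.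
- by subst q.
Qed.

Lemma ab_sim (v : Val) m : sim v (C m (t2 m)) (C m (t3 m)) ->
  sameCol v (A n m) (B n m) -> sim v (A n m) (B n m).
Proof.
move=> h23 hc.
pose Z := fun x y => (x = A n m /\ y = B n m) \/ (x = B n m /\ y = A n m) \/ sim v x y.
apply: (@bisim_sim v Z); last by left.
apply: bisim_intro.
  move=> x y [[-> ->]|[[-> ->]|h]]; [right; left|left|right; right; exact: sim_sym]; done.
move=> x y [[-> ->]|[[-> ->]|h]].
- split=> // x1 hx; case: (le_first hx ltac:(discriminate)) => [<-|[z [hz1 hz2]]].
    by exists (B n m); split; [exact: le_refl|left].
  case: (prec_A_inv hz1) => ez; subst z.
    exists x1; split; [exact: prec_le_trans (precB1 m) hz2|right; right; exact: sim_refl].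
  have [_ f _] := sim_bisim h23; have [y1 [hy1 hs]] := f _ hz2.
  exists y1; split; [exact: prec_le_trans (precB3 m) hy1|by right; right].
- split; first by move=> g; rewrite (hc g).
  move=> x1 hx; case: (le_first hx ltac:(discriminate)) => [<-|[z [hz1 hz2]]].
    by exists (A n m); split; [exact: le_refl|right; left].
  case: (prec_B_inv hz1) => ez; subst z.
    exists x1; split; [exact: prec_le_trans (precA1 m) hz2|right; right; exact: sim_refl].
  have [_ f _] := sim_bisim (sim_sym h23); have [y1 [hy1 hs]] := f _ hz2.
  exists y1; split; [exact: prec_le_trans (precA2 m) hy1|by right; right].
- have [c f _] := sim_bisim h; split=> // x1 /f [y1 [h1 h2]].
  by exists y1; split=> //; right; right.
Qed.

Lemma eab_sim (v : Val) m (j : 'I_K) : sim v (A n m) (B n m) ->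
  sameCol v (EA m j) (EB m j) -> sim v (EA m j) (EB m j).
Proof.
move=> hab hc.
pose Z := fun x y => (x = EA m j /\ y = EB m j) \/ (x = EB m j /\ y = EA m j) \/ sim v x y.
apply: (@bisim_sim v Z); last by left.
apply: bisim_intro.
  move=> x y [[-> ->]|[[-> ->]|h]]; [right; left|left|right; right; exact: sim_sym]; done.
move=> x y [[-> ->]|[[-> ->]|h]].
- split=> // x1 hx; case: (le_first hx ltac:(discriminate)) => [<-|[z [hz1 hz2]]].
    by exists (EB m j); split; [exact: le_refl|left].
  case: (prec_EA_inv hz1) => [ez|[i [hi ez]]]; subst z.
    have [_ f _] := sim_bisim hab; have [y1 [hy1 hs]] := f _ hz2.
    exists y1; split; [exact: prec_le_trans (prec_ebb s m j) hy1|by right; right].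
  exists x1; split; [exact: prec_le_trans (prec_ebd s m hi) hz2|right; right; exact: sim_refl].
- split; first by move=> g; rewrite (hc g).
  move=> x1 hx; case: (le_first hx ltac:(discriminate)) => [<-|[z [hz1 hz2]]].
    by exists (EA m j); split; [exact: le_refl|right; left].
  case: (prec_EB_inv hz1) => [ez|[i [hi ez]]]; subst z.
    have [_ f _] := sim_bisim (sim_sym hab); have [y1 [hy1 hs]] := f _ hz2.
    exists y1; split; [exact: prec_le_trans (prec_eaa s m j) hy1|by right; right].
  exists x1; split; [exact: prec_le_trans (prec_ead s m hi) hz2|right; right; exact: sim_refl].
- have [c f _] := sim_bisim h; split=> // x1 /f [y1 [h1 h2]].
  by exists y1; split=> //; right; right.
Qed.

Definition RegionSim (v : Val) m (x0 : P) := forall y y', y <> Bot -> y' <> Bot ->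
  m < lay y -> m < lay y' -> sameCol v y x0 -> sameCol v y' x0 -> sim v y y'.

Lemma collapse (v : Val) m (x0 : P) : Ups v ->
  sim v (C m (t2 m)) (C m (t3 m)) -> sameCol v (A n m) (B n m) ->
  (forall j, sameCol v (EA m j) (EB m j)) -> (forall j, sameCol v (C m.+1 j) x0) ->
  RegionSim v m x0.
Proof.
move=> hup h23 hab he hc.
have sab := ab_sim h23 hab.
have se : forall j, sim v (EA m j) (EB m j) by move=> j; apply: eab_sim.
pose R := fun y => [/\ y <> Bot, m < lay y & sameCol v y x0].
pose Z := fun y y' => (R y /\ R y') \/ sim v y y'.
move=> y y' ny ny' ly ly' cy cy'.
apply: (@bisim_sim v Z); last by left.
apply: bisim_intro.
  by move=> a b [[h1 h2]|h]; [left|right; exact: sim_sym].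
move=> a b [[[na la ca] [nb lb cb]]|h]; last first.
  have [c f _] := sim_bisim h; split=> // x1 /f [y1 [h1 h2]].
  by exists y1; split=> //; right.
split; first by move=> g; rewrite (ca g) (cb g).
move=> x1 hx; have nx1 := le_nbot hx na.
case: (classic (R x1)) => hR.
  by exists b; split; [exact: le_refl|left].
have hl1 : lay x1 <= m.
  rewrite leqNgt; apply/negP => hl; apply: hR; split=> // g; split=> hg.
  + have e : lay x1 = m.+1 + (lay x1 - m.+1) by lia.
    have [j hj] := chainC nx1 e; apply/(hc j g); exact: hup hj hg.
  + apply: hup hx _; exact/(ca g).
case: (below_except nb nx1 lb hl1) => [hb|[j [eb ex]]].
  by exists x1; split=> //; right; exact: sim_refl.
exists (EB m j); split; first by rewrite eb; exact/prec_le/prec_ceb.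
by right; rewrite ex.
Qed.

Lemma fchoice (X Y : Type) (R : X -> Y -> Prop) :
  (forall a, exists b, R a b) -> exists f : X -> Y, forall a, R a (f a).
Proof.
move=> H; exists (fun a => proj1_sig (constructive_indefinite_description _ (H a))).
by move=> a; exact: proj2_sig.
Qed.

Definition Q : finType := (('I_4 * 'I_K) + bool)%type.

Definition pt_at (l : nat) (q : Q) : P :=
  match q with
  | inl (a, k) => match val a with 0 => C l k | 1 => D l k | 2 => EA l k | _ => EB l k end
  | inr b => if b then A n l else B n l
  end.

Lemma pt_at_ex (x : P) : x <> Bot -> exists q, x = pt_at (lay x) q.
Proof.
case: x => //= [m|m|m k|m k|m k|m k] _.
- by exists (inr true).
- by exists (inr false).
- by exists (inl (@Ordinal 4 0 isT, k)).
- by exists (inl (@Ordinal 4 1 isT, k)).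
- by exists (inl (@Ordinal 4 2 isT, k)).
- by exists (inl (@Ordinal 4 3 isT, k)).
Qed.

Local Notation T := (size s).

Definition I : finType := ((unit + ('I_(T + 2) * Q)) + (('I_n * 'I_(2 * T + 7) * Q) + {ffun 'I_n -> bool}))%type.

Definition colv (v : Val) (x : P) : {ffun 'I_n -> bool} := [ffun g => asb (v g x)].

Lemma colv_same (v : Val) x y : colv v x = colv v y -> sameCol v x y.
Proof.
move=> e g; have : colv v x g = colv v y g by rewrite e.
rewrite !ffunE => e2; split=> h.
- by apply/asbP; rewrite -e2; apply/asbP.
- by apply/asbP; rewrite e2; apply/asbP.
Qed.

Lemma same_colv (v : Val) x y : sameCol v x y -> colv v x = colv v y.
Proof.
move=> h; apply/ffunP => g; rewrite !ffunE.
by case: asbP => h1; case: asbP => h2 //; exfalso; [apply: h2; apply/h|apply: h1; apply/h].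
Qed.

Lemma mod_in a i0 : i0 < T -> exists m, a <= m < a + T /\ m %% T = i0.
Proof.
move=> hi; elim: a => [|a [m [/andP [h1 h2] h3]]].
  by exists i0; rewrite modn_small //; split=> //; apply/andP; split.
case: (eqVneq m a) => e.
  exists (a + T); rewrite modnDr -e h3; split=> //; apply/andP; split; lia.
exists m; split=> //; apply/andP; split; lia.
Qed.

Definition GoodP (v : Val) (b : {ffun 'I_n -> bool}) m :=
  exists z, [/\ z <> Bot, m < lay z, colv v z = b & RegionSim v m z].

Definition Sg (v : Val) g p :=
  (exists z, [/\ z <> Bot, p - 2 - T <= lay z & v g z]) /\
  (forall w, w <> Bot -> p + 2 <= lay w -> ~ v g w).

Lemma cover (v : Val) : Ups v -> exists r : I -> P, forall x, exists i, sim v x (r i).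
Proof.
move=> hup.
have [k [k' [hkk hc]]] := pair_exists hup.
have hpair : forall m, sim v (C m k) (C m k').
  by move=> m; have := swap_sim hkk hc (3 * m); rewrite !Fp0.
have [k1 /andP [hk1 hk1']] := pick2 k k'.
pose tr0 := (val k1, val k, val k').
have htr : is_triple n tr0.
  have hK := K_pos.
  have l1 := ltn_ord k1; have l2 := ltn_ord k; have l3 := ltn_ord k'.
  move: hk1 hk1' hkk; rewrite !neqE => hk1 hk1' hkk.
  rewrite /is_triple /NN /= hk1 hk1' hkk /=; repeat (apply/andP; split); lia.
have tr_in : tr0 \in s by rewrite (proj2 Hs).
pose i0 := index tr0 s.
have hi0 : i0 < T by rewrite index_mem.
have sel_m : forall m, m %% T = i0 -> sim v (C m (t2 m)) (C m (t3 m)).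
  move=> m hm.
  have es : sel s m = tr0 by rewrite /sel hm nth_index.
  case: (t_vals m) => _ v2 v3 _ _.
  have -> : t2 m = k by apply: val_inj; rewrite v2 es.
  by have -> : t3 m = k' by apply: val_inj; rewrite v3 es.
have [pg hpg] : exists pg : 'I_n -> nat, forall g, (exists p, Sg v g p) -> Sg v g (pg g).
  apply: (fchoice (R := fun g p0 => (exists p, Sg v g p) -> Sg v g p0)) => g.
  case: (classic (exists p, Sg v g p)) => [[p hp]|hn]; first by exists p.
  by exists 0.
have [rep hrep] : exists rep : {ffun 'I_n -> bool} -> P, forall b, (exists m, GoodP v b m) ->
    exists m, (forall m', GoodP v b m' -> m <= m') /\
      [/\ rep b <> Bot, m < lay (rep b), colv v (rep b) = b & RegionSim v m (rep b)].
  apply: (fchoice (R := fun b z => (exists m, GoodP v b m) -> exists m, (forall m', GoodP v b m' -> m <= m') /\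
      [/\ z <> Bot, m < lay z, colv v z = b & RegionSim v m z])) => b.
  case: (classic (exists m, GoodP v b m)) => [hex|hn]; last by exists Bot.
  have [m0 [[z hz] hmin]] := least hex.
  exists z => _; exists m0; split=> // m' hm'.
  by rewrite leqNgt; apply/negP => /hmin.
pose r := fun i : I => match i with
  | inl (inl _) => Bot
  | inl (inr (a, q)) => pt_at a q
  | inr (inl (g, d, q)) => pt_at (pg g - (T + 3) + d) q
  | inr (inr b) => rep b
  end.
exists r => x.
case: (classic (x = Bot)) => [->|nx].
  by exists (inl (inl tt)); exact: sim_refl.
have [q hq] := pt_at_ex nx.
set p := lay x in hq.
case: (ltnP p (T + 2)) => hp.
  by exists (inl (inr (Ordinal hp, q))); rewrite /r /= -hq; exact: sim_refl.
case: (classic (forall z, z <> Bot -> p - 2 - T <= lay z -> lay z <= p - 2 -> sameCol v z x)) => hU.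
  have [m [/andP [hm1 hm2] hm3]] := mod_in (p - 2 - T) hi0.
  have U' : forall z, z <> Bot -> lay z = m \/ lay z = m.+1 -> sameCol v z x.
    move=> z nz hl; apply: hU => //; lia.
  have hab : sameCol v (A n m) (B n m).
    move=> g; rewrite (U' (A n m)) //; last by left.
    by rewrite (U' (B n m)) //; left.
  have he : forall j, sameCol v (EA m j) (EB m j).
    move=> j g; rewrite (U' (EA m j)) //; last by left.
    by rewrite (U' (EB m j)) //; left.
  have hcc : forall j, sameCol v (C m.+1 j) x by move=> j; apply: U' => //; right.
  have RS := collapse hup (sel_m _ hm3) hab he hcc.
  have G : GoodP v (colv v x) m.
    exists x; split=> //; rewrite /p in hm2; lia.
  have [m0 [hmin [h1 h2 h3 h4]]] := hrep _ (ex_intro _ m G).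
  exists (inr (inr (colv v x))); rewrite /r.
  have hm0 := hmin _ G.
  rewrite /p in hm2.
  apply: h4 => //; try lia; try (by move=> g); apply: colv_same; by rewrite h3.
move: hU => /not_all_ex_not [z /not_all_ex_not [nz /not_all_ex_not [hz1 /not_all_ex_not [hz2 hz3]]]].
move: hz3 => /not_all_ex_not [g hg].
have hxz : le s x z by apply: below_all => //; rewrite -/p; lia.
have mono : v g x -> v g z := fun h => hup g _ _ hxz h.
have hgz : v g z /\ ~ v g x.
  case: (classic (v g x)) => hx.
    by exfalso; apply: hg; split=> _ //; exact: mono.
  split=> //; apply: NNPP => hn; apply: hg; split=> h; exfalso; [exact: hn h|exact: hx h].
have Sp : Sg v g p.
  split; first by exists z; split=> //; case: hgz.
  move=> w nw hw hvw; apply: (proj2 hgz); apply: (hup g w x) hvw; apply: below_all => //.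
have Sq := hpg g (ex_intro _ p Sp).
have d1 : p <= pg g + T + 3.
  case: Sp => [[z1 [nz1 hz1' vz1]] _]; case: Sq => _ hq2.
  case: (leqP (pg g + 2) (lay z1)) => hl; first by case: (hq2 _ nz1 hl).
  lia.
have d2 : pg g <= p + T + 3.
  case: Sq => [[z1 [nz1 hz1' vz1]] _]; case: Sp => _ hq2.
  case: (leqP (p + 2) (lay z1)) => hl; first by case: (hq2 _ nz1 hl).
  lia.
have hd : p - (pg g - (T + 3)) < 2 * T + 7 by lia.
exists (inr (inl (g, Ordinal hd, q))); rewrite /r /=.
have -> : pg g - (T + 3) + (p - (pg g - (T + 3))) = p by lia.
rewrite -hq; exact: sim_refl.
Qed.

Definition code : finType := ({ffun (I * I)%type -> bool} * {ffun (I * 'I_n)%type -> bool})%type.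

Fixpoint feval (c : code) (t : hterm n) (i : I) : bool :=
  match t with
  | TVar g => c.2 (i, g)
  | TBot => false
  | TTop => true
  | TMeet t1 t2 => feval c t1 i && feval c t2 i
  | TJoin t1 t2 => feval c t1 i || feval c t2 i
  | TImp t1 t2 => [forall j, c.1 (i, j) ==> (feval c t1 j ==> feval c t2 j)]
  end.

Definition code_of (v : Val) (r : I -> P) : code :=
  ([ffun ij : (I * I)%type => asb (exists y, le s (r ij.1) y /\ sim v y (r ij.2))],
   [ffun ig : (I * 'I_n)%type => asb (v ig.2 (r ig.1))]).

Lemma feval_spec (v : Val) (r : I -> P) : (forall x, exists i, sim v x (r i)) ->
  forall t j, feval (code_of v r) t j <-> eval s v t (r j).
Proof.
move=> hr; elim=> [g|||t1 IH1 t2 IH2|t1 IH1 t2 IH2|t1 IH1 t2 IH2] j /=.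
- by rewrite ffunE; split=> /asbP.
- by [].
- by [].
- by rewrite -IH1 -IH2; split=> /andP.
- by rewrite -IH1 -IH2; split=> /orP.
- split.
  + move=> /forallP h [y [[hy1 hy2] hy]].
    have [i hi] := hr y.
    have hR : (code_of v r).1 (j, i) by rewrite ffunE; apply/asbP; exists y.
    have := h i; rewrite hR /= => /implyP h2.
    have e1 : feval (code_of v r) t1 i by apply/IH1; apply/(eval_sim t1 hi).
    by apply: hy2; apply/(eval_sim t2 hi); apply/IH2; apply: h2.
  + move=> hn; apply/forallP => i; apply/implyP; rewrite ffunE => /asbP [y0 [hy0 hs0]].
    apply/implyP => /IH1 h1; apply/IH2; apply/(eval_sim t2 hs0).
    apply: NNPP => h2; apply: hn; exists y0; split=> //; split=> //.
    exact/(eval_sim t1 hs0).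
Qed.

Definition SigT : finType := {ffun code -> {ffun I -> bool}}.
Definition sigt (t : hterm n) : SigT := [ffun c => [ffun i => feval c t i]].

Lemma sig_equiv (t u : hterm n) : sigt t = sigt u -> term_equiv n s t u.
Proof.
move=> e v hv x.
have hup : Ups v by move=> g; case: (hv g).
have [r hr] := cover hup.
have [i hi] := hr x.
rewrite (eval_sim t hi) (eval_sim u hi) -!(feval_spec hr).
have : sigt t (code_of v r) i = sigt u (code_of v r) i by rewrite e.
by rewrite !ffunE => ->.
Qed.

Lemma in_list (X : eqType) (x : X) (l : seq X) : x \in l -> List.In x l.
Proof.
elim: l => [//|y l IH]; rewrite in_cons => /orP [/eqP ->|h]; first by left.
by right; apply: IH.
Qed.

Definition sigl : seq SigT := enum SigT.
Lemma sigl_all f : List.In f sigl.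
Proof. by apply: in_list; rewrite /sigl mem_enum. Qed.

Lemma final : free_algebra_finite n n s.
Proof.
have [pick hpick] : exists pick : SigT -> hterm n, forall f, (exists t, sigt t = f) -> sigt (pick f) = f.
  apply: (fchoice (R := fun f u => (exists t, sigt t = f) -> sigt u = f)) => f.
  case: (classic (exists t, sigt t = f)) => [[t ht]|hn]; first by exists t.
  by exists TBot.
exists (List.map pick sigl) => t.
exists (pick (sigt t)); split.
  by apply: List.in_map; apply: sigl_all.
apply: sig_equiv; rewrite hpick //; by exists t.
Qed.
End Main.

Theorem mainTheorem10 (n : nat) (s : seq (nat * nat * nat)) :
  2 <= n -> enumeration n s -> free_algebra_finite n n s.
Proof. move=> Hn Hs; exact: final Hn Hs. Qed.
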